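(* Let $G$ be an abelian group with nontrivial torsion subgroup, let $p=p(G)$, and let $A\subseteq G$ with $|A|<\lceil \log_2 p\rceil$. Then there exists a total ordering $\preceq$ of $A$ that is compatible with the group structure of $G$.
   Context: $p(G)$ denotes the smallest cardinality of a nonzero subgroup of $G$. A total order $\preceq$ on $A\subseteq G$ is compatible with the group structure if for all $a,b,c\in A$, $a\preceq b$ implies $a+c\preceq b+c$. *)

(* Defs.v *)
From HB Require Import structures.
From mathcomp Require Import all_boot all_order all_algebra.
Set Implicit Arguments. Unset Strict Implicit. Unset Printing Implicit Defensive.
Import GRing.Theory.
Local Open Scope ring_scope.

Definition is_subgroup (G : zmodType) (H : G -> Prop) : Prop :=
  H 0 /\ (forall x y, H x -> H y -> H (x - y)).

Definition is_nonzero (G : zmodType) (H : G -> Prop) : Prop :=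
  exists x, H x /\ x != 0.

Definition has_card (G : zmodType) (H : G -> Prop) (n : nat) : Prop :=
  exists s : seq G, uniq s /\ (forall x, H x <-> x \in s) /\ size s = n.

Definition nontrivial_torsion (G : zmodType) : Prop :=
  exists x : G, x != 0 /\ exists n : nat, (0 < n)%N /\ x *+ n = 0.

(* p = p(G): the smallest cardinality of a nonzero subgroup of G
   (infinite subgroups have infinite cardinality, hence never the minimum
   when a finite nonzero subgroup exists). *)
Definition is_pG (G : zmodType) (p : nat) : Prop :=
  (exists H : G -> Prop, is_subgroup H /\ is_nonzero H /\ has_card H p) /\
  (forall (H : G -> Prop) (n : nat),
      is_subgroup H -> is_nonzero H -> has_card H n -> (p <= n)%N).

Definition total_order_on (G : zmodType) (A : G -> Prop) (le : G -> G -> Prop) : Prop :=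
  (forall a, A a -> le a a) /\
  (forall a b, A a -> A b -> le a b -> le b a -> a = b) /\
  (forall a b c, A a -> A b -> A c -> le a b -> le b c -> le a c) /\
  (forall a b, A a -> A b -> le a b \/ le b a).

(* le is compatible with the group structure on A:
   for a b c in A, a <= b implies a + c <= b + c (whenever these sums lie in A,
   so that the comparison makes sense for an order on A). *)
Definition compatible_on (G : zmodType) (A : G -> Prop) (le : G -> G -> Prop) : Prop :=
  forall a b c, A a -> A b -> A c -> A (a + c) -> A (b + c) ->
    le a b -> le (a + c) (b + c).

(* Main.v *)
From HB Require Import structures.
From mathcomp Require Import all_boot all_order all_algebra.
From mathcomp Require Import zify.
From Stdlib Require Import Classical.
Require Import Defs.
Set Implicit Arguments. Unset Strict Implicit. Unset Printing Implicit Defensive.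
Import Order.TTheory GRing.Theory Num.Theory.
Local Open Scope ring_scope.


Lemma mulrn_mod (G : zmodType) (g : G) m n : g *+ m = 0 -> g *+ n = g *+ (n %% m).
Proof.
move=> gm; rewrite {1}(divn_eq n m) mulrnDr mulnC mulrnA gm mul0rn add0r //.
Qed.

Lemma small_torsion (G : zmodType) (p : nat) (g : G) (N : nat) :
 (forall (H : G -> Prop) n, is_subgroup H -> is_nonzero H -> has_card H n -> (p <= n)%N) ->
 g != 0 -> (0 < N)%N -> g *+ N = 0 -> (p <= N)%N.
Proof.
move=> Hp g0 N0 gN.
have ex: exists m, (0 < m)%N && (g *+ m == 0) by exists N; rewrite N0 gN eqxx.
case: (ex_minnP ex) => m /andP[m0 /eqP gm] mmin.
apply: (@leq_trans m); last by apply: mmin; rewrite N0 gN eqxx.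
pose s := [seq g *+ i | i <- iota 0 m].
have ins n : g *+ n \in s.
  rewrite (mulrn_mod n gm); apply: map_f; rewrite mem_iota add0n ltn_pmod //.
have inv x : x \in s -> exists2 i, (i < m)%N & x = g *+ i.
  by move=> /mapP[i]; rewrite mem_iota add0n => /andP[_ im] ->; exists i.
apply: (Hp (fun x => x \in s)).
- split; first by rewrite -(mulr0n g).
  move=> x y /inv[i im ->] /inv[j jm ->].
  have -> : - (g *+ j) = g *+ (m - j).
    apply/eqP; rewrite eq_sym -subr_eq0 opprK -mulrnDr subnK ?gm // ltnW //.
  by rewrite -mulrnDr.
- by exists g; rewrite g0 -{1}(mulr1n g) ins.
- exists s; split; last split => //; last by rewrite size_map size_iota.
  rewrite map_inj_in_uniq ?iota_uniq // => i j; rewrite !mem_iota !add0n.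
  move=> /andP[_ im] /andP[_ jm].
  wlog ij : i j im jm / (i <= j)%N.
    by move=> W E; case: (leqP i j) => h; [|apply/esym]; apply: W => //; rewrite ltnW.
  move=> E; apply/eqP; rewrite eqn_leq ij /=; rewrite leqNgt; apply/negP => lt.
  have : g *+ (j - i) = 0 by apply/eqP; rewrite mulrnBr // E subrr.
  move=> /eqP E2; have := mmin (j - i)%N; rewrite subn_gt0 lt E2 => /(_ isT).
  by rewrite leqNgt; apply/negP; apply/negP; rewrite -ltnNge; lia.
Qed.

Definition TUrow n (v : 'I_n -> int) := exists oa oc : option 'I_n,
  forall t, v t = (oa == Some t)%:Z - (oc == Some t)%:Z.

Lemma obind_unlift n (j : 'I_n.+1) (oa : option 'I_n.+1) (t : 'I_n) :
  (oa == Some (lift j t)) = (obind (unlift j) oa == Some t).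
Proof.
case: oa => [a|] //=; case: (unliftP j a) => [u ->|->] /=.
  apply/eqP/eqP => [[] /(congr1 (unbump j)) E|[]->] //.
  by congr Some; apply/val_inj; rewrite /= !bumpK in E.
by apply/eqP => -[] /eqP; rewrite (negPf (neq_lift _ _)).
Qed.

Lemma det_row1 n (C : 'M[int]_n.+1) i j0 (e : int) :
  `|e| <= 1 -> (forall t, C i t = if t == j0 then e else 0) ->
  `|\det (row' i (col' j0 C))| <= 1 -> `|\det C| <= 1.
Proof.
move=> he hr hm; rewrite (expand_det_row _ i) (bigD1 j0) //= big1 ?addr0.
  rewrite hr eqxx /cofactor normrM normrM normrX normrN1 expr1n mul1r.
  by rewrite -(mulr1 1) ler_pM.
by move=> t tj; rewrite hr (negPf tj) mul0r.
Qed.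

Lemma det_TU n (C : 'M[int]_n) : (forall i, TUrow (C i)) -> `|\det C| <= 1.
Proof.
elim: n C => [|n IH] C H; first by rewrite det_mx00 normr1.
have minorTU i j : `|\det (row' i (col' j C))| <= 1.
  apply: IH => t; have [oa [oc Ht]] := H (lift i t).
  exists (obind (unlift j) oa), (obind (unlift j) oc) => t'.
  by rewrite !mxE Ht !obind_unlift.
case: (classic (exists i, exists oa oc, (forall t, C i t = (oa == Some t)%:Z - (oc == Some t)%:Z)
   /\ (oa = None \/ oc = None \/ oa = oc))).
  move=> [i [oa [oc [Hi Hc]]]].
  case: Hc => [?|[?|?]]; subst.
  - case: oc Hi => [c|] Hi.
      apply: (@det_row1 _ C i c (-1)); rewrite ?normrN ?normr1 // => t.
      rewrite Hi /= sub0r; case: (eqVneq t c) => [->|ne]; rewrite ?eqxx //.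
      by case: eqP => // -[] E; move: ne; rewrite E eqxx.
    apply: (@det_row1 _ C i ord0 0); rewrite ?normr0 // => t.
    by rewrite Hi /= subrr; case: ifP.
  - case: oa Hi => [a|] Hi.
      apply: (@det_row1 _ C i a 1); rewrite ?normr1 // => t.
      rewrite Hi /= subr0; case: (eqVneq t a) => [->|ne]; rewrite ?eqxx //.
      by case: eqP => // -[] E; move: ne; rewrite E eqxx.
    apply: (@det_row1 _ C i ord0 0); rewrite ?normr0 // => t.
    by rewrite Hi /= subrr; case: ifP.
  - apply: (@det_row1 _ C i ord0 0); rewrite ?normr0 // => t.
    by rewrite Hi subrr; case: ifP.
move=> Hn.
have rs i : \sum_t C i t = 0.
  have [oa [oc Ht]] := H i.
  case: oa Ht => [a|] Ht; last by case: Hn; exists i, None, oc; split; auto.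
  case: oc Ht => [c|] Ht; last by case: Hn; exists i, (Some a), None; split; auto.
  have ac : a != c.
    by apply/eqP => ac; case: Hn; exists i, (Some a), (Some c); split; [exact: Ht| right; right; rewrite ac].
  under eq_bigr do rewrite Ht.
  rewrite sumrB (bigD1 a) //= big1 ?addr0 => [|t ta]; last first.
    by case: eqP => // -[] E; move: ta; rewrite E eqxx.
  rewrite (bigD1 c) //= big1 ?addr0 => [|t ta]; last first.
    by case: eqP => // -[] E; move: ta; rewrite E eqxx.
  by rewrite !eqxx subrr.
pose v : 'cV[int]_n.+1 := const_mx 1.
have Cv : C *m v = 0.
  apply/matrixP => i j; rewrite !mxE; rewrite -[RHS](rs i).
  by apply: eq_bigr => t _; rewrite mxE mulr1.
have : (\det C)%:M *m v = 0 by rewrite -mul_adj_mx -mulmxA Cv mulmx0.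
move=> /matrixP /(_ ord0 ord0); rewrite mul_scalar_mx !mxE mulr1 => ->.
by rewrite normr0.
Qed.

Definition TU2row n (v : 'I_n -> int) := exists v1 v2, TUrow v1 /\ TUrow v2 /\
  forall t, v t = v1 t + v2 t.

Lemma det_TU2 n (C : 'M[int]_n) : (forall i, TU2row (C i)) -> `|\det C| <= 2 ^+ n.
Proof.
move=> H; move: (C) (H).
suff gen : forall m (C : 'M[int]_n), (forall i : 'I_n, if (i < m)%N then TU2row (C i) else TUrow (C i))
   -> `|\det C| <= 2 ^+ m.
  by move=> C0 H0; apply: gen => i; rewrite ltn_ord.
clear C H; elim=> [|m IH] C HC.
  by rewrite expr0; apply: det_TU => i; have := HC i.
case: (ltnP m n) => mn; last first.
  apply: (le_trans (IH C _)); last by rewrite exprS ler_peMl // ?exprn_ge0.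
  move=> i; have im : (i < m)%N by apply: leq_trans (ltn_ord i) mn.
  have im1 : (i < m.+1)%N by apply: leqW.
  by have := HC i; rewrite im im1.
pose i0 := Ordinal mn.
have [v1 [v2 [h1 [h2 hv]]]] : TU2row (C i0) by have := HC i0; rewrite ltnSn.
pose C1 := \matrix_(i, t) if i == i0 then v1 t else C i t.
pose C2 := \matrix_(i, t) if i == i0 then v2 t else C i t.
have -> : \det C = 1 * \det C1 + 1 * \det C2.
  apply: (@determinant_multilinear _ _ _ _ _ i0).
  - by rewrite !scale1r; apply/rowP => t; rewrite !mxE !eqxx hv.
  - by apply/matrixP => i t; rewrite !mxE eq_sym (negPf (neq_lift _ _)).
  - by apply/matrixP => i t; rewrite !mxE eq_sym (negPf (neq_lift _ _)).
have HCk (v : 'I_n -> int) : TUrow v -> forall i : 'I_n, if (i < m)%N then TU2row ((\matrix_(i, t) if i == i0 then v t else C i t) i) else TUrow ((\matrix_(i, t) if i == i0 then v t else C i t) i).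
  move=> hv' i; case: (eqVneq i i0) => [->|ne].
    rewrite ltnn; case: hv' => oa [oc E]; exists oa, oc => t; by rewrite mxE eqxx E.
  have := HC i; have : (i : nat) != m by apply: contra ne => /eqP E; apply/eqP/val_inj.
  move=> nm.
  case: (ltnP i m) => im.
    rewrite (leqW im) => -[w1 [w2 [a1 [a2 E]]]]; exists w1, w2; split => //; split => // t.
    by rewrite mxE (negPf ne) E.
  have -> : (i < m.+1)%N = false by apply/negbTE; move: im nm; lia.
  move=> [oa [oc E]]; exists oa, oc => t; by rewrite mxE (negPf ne) E.
rewrite !mul1r exprS mulr2n mulrDl mul1r.
apply: (le_trans (ler_normD _ _)); apply: lerD; apply: IH; exact: HCk.
Qed.

Local Notation toQ := (intr : int -> rat).

Definition relmx (G : zmodType) k (sx : 'I_k -> G) : 'M[int]_(#|{: 'I_k * 'I_k * 'I_k}%type|, k) :=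
  \matrix_(r, x) (let t := enum_val r in
     if sx t.1.1 + sx t.1.2 == sx t.2 then
       ((x == t.1.1)%:R + (x == t.1.2)%:R - (x == t.2)%:R : int) else 0).

Lemma sum_ind (R : nmodType) k (a : 'I_k) (F : 'I_k -> R) :
  \sum_x (if x == a then F x else 0) = F a.
Proof. by rewrite -big_mkcond big_pred1_eq. Qed.

Lemma sum_ind' (R : nmodType) k (a : 'I_k) (F : 'I_k -> R) :
  \sum_x (if a == x then F x else 0) = F a.
Proof. by under eq_bigr do rewrite eq_sym; rewrite sum_ind. Qed.

Lemma ev_relrow (G : zmodType) k (sx : 'I_k -> G) r :
  \sum_x sx x *~ relmx sx r x = 0.
Proof.
rewrite /relmx; under eq_bigr do rewrite mxE.
move: (enum_val r) => [[a b] c] /=.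
case: (eqVneq (sx a + sx b) (sx c)) => [E|NE]; last first.
  by rewrite big1 // => x _; rewrite (negPf NE) mulr0z.
under eq_bigr do rewrite !mulrzDr mulrNz !mulrz_nat !mulrb.
by rewrite sumrB big_split /= !sum_ind E subrr.
Qed.

Lemma ev_mul (G : zmodType) k m (sx : 'I_k -> G) (z : 'rV[int]_m) (B : 'M[int]_(m, k)) :
  (forall t, \sum_x sx x *~ B t x = 0) -> \sum_x sx x *~ (z *m B) 0 x = 0.
Proof.
move=> HB.
under eq_bigr do rewrite mxE mulrz_sumr.
rewrite exchange_big /= big1 // => t _.
under eq_bigr do rewrite mulrC mulrzA.
by rewrite -mulrz_suml HB mul0rz.
Qed.

Lemma map_toQ_inj m n : injective (map_mx toQ : 'M[int]_(m, n) -> 'M[rat]_(m, n)).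
Proof.
move=> A B /matrixP E; apply/matrixP => a b; have := E a b; rewrite !mxE; exact: intr_inj.
Qed.

Definition urow k (i j : 'I_k) : 'rV[int]_k := \row_x ((x == i)%:R - (x == j)%:R).

Lemma key (G : zmodType) (p : nat) k (sx : 'I_k -> G) :
  (forall (H : G -> Prop) n, is_subgroup H -> is_nonzero H -> has_card H n -> (p <= n)%N) ->
  (2 ^ k < p)%N -> injective sx -> forall i j : 'I_k, i != j ->
  ~~ (map_mx toQ (urow i j) <= map_mx toQ (relmx sx))%MS.
Proof.
move=> Hp hk sxi i j ij; apply/negP => sub.
set Mz := relmx sx in sub; set uz := urow i j in sub.
set M := map_mx toQ Mz in sub; set u := map_mx toQ uz in sub.
pose f := maxrankfun M.
pose B := rowsub f M.
have BM : (B :=: M)%MS := eq_maxrowsub M.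
have rkBT : row_full B^T.
  by rewrite /row_full mxrank_tr; exact: maxrowsub_free.
pose g := fullrankfun rkBT.
have Cu : rowsub g B^T \in unitmx := fullrowsub_unit rkBT.
pose Cz := mxsub f g Mz.
have CzC : map_mx toQ Cz = (rowsub g B^T)^T by apply/matrixP => a b; rewrite !mxE.
have detC : \det (map_mx toQ Cz) != 0 by rewrite CzC det_tr -unitfE -unitmxE.
have [w uw] : exists w, u = w *m B by apply/submxP; rewrite BM.
pose Bz := rowsub f Mz.
have BzB : map_mx toQ Bz = B by apply/matrixP => a b; rewrite !mxE.
pose z := colsub g uz *m \adj Cz.
have eqQ : map_mx toQ ((\det Cz) *: uz) = map_mx toQ (z *m Bz).
  rewrite map_mxZ map_mxM map_mxM map_mx_adj BzB.
  have -> : map_mx toQ (colsub g uz) = colsub g u by apply/matrixP => a b; rewrite !mxE.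
  have -> : colsub g u = w *m map_mx toQ Cz.
    by rewrite CzC trmx_mxsub trmxK mulmx_colsub -uw.
  set CQ := map_mx _ Cz.
  rewrite -(mulmxA w) mul_mx_adj mul_mx_scalar -scalemxAl -uw /CQ det_map_mx //.
have eqZ := map_toQ_inj eqQ.
have ev0 : \sum_x sx x *~ (z *m Bz) 0 x = 0.
  apply: ev_mul => t; rewrite /Bz; under eq_bigr do rewrite mxE; exact: ev_relrow.
have evd : \sum_x sx x *~ ((\det Cz) *: uz) 0 x = (sx i - sx j) *~ \det Cz.
  rewrite /uz /urow; under eq_bigr do rewrite !mxE mulrC mulrzA mulrzBr !mulrz_nat !mulrb.
  by rewrite -mulrz_suml sumrB !sum_ind.
have eq0 : (sx i - sx j) *~ \det Cz = 0 by rewrite -evd eqZ ev0.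
have dnz : \det Cz != 0.
  by apply: contra detC => /eqP d0; rewrite det_map_mx d0.
pose ginv (y : 'I_k) := [pick b | g b == y].
have ginvP (y : 'I_k) b : (g b == y) = (ginv y == Some b).
  rewrite /ginv; case: pickP => [b' /eqP gb'|none]; last by rewrite none.
  rewrite -gb'; apply/eqP/eqP => [/fullrankfun_inj -> //|[->]] //.
have TU2Cz a : TU2row (Cz a).
  have Ea b : Cz a b = if sx (enum_val (f a)).1.1 + sx (enum_val (f a)).1.2 == sx (enum_val (f a)).2
     then ((g b == (enum_val (f a)).1.1)%:R + (g b == (enum_val (f a)).1.2)%:R - (g b == (enum_val (f a)).2)%:R : int) else 0.
    by rewrite !mxE.
  move: Ea; case: (enum_val (f a)) => [[x1 x2] x3] /=.
  case: (sx x1 + sx x2 == sx x3) => Ea.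
    exists (fun b => ((ginv x1 == Some b)%:Z - (ginv x3 == Some b)%:Z)).
    exists (fun b => ((ginv x2 == Some b)%:Z - (None == Some b)%:Z)).
    split; first by exists (ginv x1), (ginv x3).
    split; first by exists (ginv x2), None.
    by move=> b; rewrite Ea !ginvP !natz /= subr0 addrAC.
  exists (fun b => 0), (fun b => 0); split; first by exists None, None => t; rewrite subrr.
  split; first by exists None, None => t; rewrite subrr.
  by move=> b; rewrite Ea addr0.
have bnd := det_TU2 TU2Cz.
have g0 : sx i - sx j != 0 by rewrite subr_eq0 (inj_eq sxi).
move: eq0 dnz bnd; set d := \det Cz => eq0 dnz bnd.
have eqN : (sx i - sx j) *+ `|d|%N = 0.
  rewrite pmulrn abszE; case: (lerP 0 d) => h.
    by rewrite ger0_norm.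
  by rewrite ltr0_norm // mulrNz eq0 oppr0.
have N0 : (0 < `|d|%N)%N by rewrite absz_gt0.
have pN := small_torsion Hp g0 N0 eqN.
have Nb : (`|d|%N <= 2 ^ k)%N.
  apply: (@leq_trans (2 ^ \rank M)); last by rewrite leq_pexp2l // rank_leq_col.
  by rewrite -lez_nat abszE -natz natrX.
by move: (leq_trans pN Nb); rewrite leqNgt hk.
Qed.

Fixpoint lexle (s1 s2 : seq rat) : bool :=
  match s1, s2 with
  | x :: s1', y :: s2' => (x < y) || ((x == y) && lexle s1' s2')
  | _, _ => true
  end.

Section Lex.
Variable I : Type.
Implicit Types (e : seq I) (u v w : I -> rat).

Lemma lex_refl e u : lexle (map u e) (map u e).
Proof. by elim: e => //= x e ->; rewrite eqxx orbT. Qed.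

Lemma lex_anti e u v : lexle (map u e) (map v e) -> lexle (map v e) (map u e) ->
  map u e = map v e.
Proof.
elim: e => //= x e IH /orP[lt|/andP[/eqP eq l1]] /orP[lt'|/andP[/eqP eq' l2]].
- by move: (lt_trans lt lt'); rewrite ltxx.
- by move: lt; rewrite eq' ltxx.
- by move: lt'; rewrite eq ltxx.
- by rewrite eq (IH l1 l2).
Qed.

Lemma lex_trans e u v w : lexle (map u e) (map v e) -> lexle (map v e) (map w e) ->
  lexle (map u e) (map w e).
Proof.
elim: e => //= x e IH /orP[lt|/andP[/eqP eq l1]] /orP[lt'|/andP[/eqP eq' l2]].
- by rewrite (lt_trans lt lt').
- by rewrite -eq' lt.
- by rewrite eq lt'.
- by rewrite eq eq' eqxx (IH l1 l2) orbT.
Qed.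

Lemma lex_total e u v : lexle (map u e) (map v e) || lexle (map v e) (map u e).
Proof.
elim: e => //= x e IH; case: (ltgtP (u x) (v x)) => //= ->; rewrite eqxx //=.
Qed.

Lemma lex_add e u v w : lexle (map u e) (map v e) ->
  lexle (map (fun t => u t + w t) e) (map (fun t => v t + w t) e).
Proof.
elim: e => //= x e IH; rewrite ltrD2r (inj_eq (addIr _)).
by case: (u x < v x) => //= /andP[-> /IH].
Qed.
End Lex.

Lemma toQ_nat (b : bool) : toQ (b%:R) = b%:R.
Proof. by rewrite rmorph_nat. Qed.

Unset Implicit Arguments.

Theorem lemma3p10 (G : zmodType) (p : nat) (A : G -> Prop) (k : nat) :
  nontrivial_torsion G -> is_pG G p ->
  has_card A k -> (k < up_log 2 p)%N ->
  exists le : G -> G -> Prop, total_order_on A le /\ compatible_on A le.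
Proof.
move=> _ [_ Hp] [s [us [memA sz]]] hk.
have h2k : (2 ^ k < p)%N.
  rewrite ltnNge; apply/negP => le; have := up_log_min (isT : (1 < 2)%N) le.
  by rewrite leqNgt hk.
pose sx (i : 'I_k) := nth 0 s i.
have sxi : injective sx.
  move=> i j /eqP; rewrite /sx nth_uniq ?sz // => /eqP; exact: val_inj.
have inA x : A x -> exists a, x = sx a.
  move=> /memA xs; have lt : (index x s < k)%N by rewrite -sz index_mem.
  by exists (Ordinal lt); rewrite /sx /= nth_index.
have Ain a : A (sx a) by apply/memA; rewrite /sx mem_nth // sz.
pose M := map_mx toQ (relmx sx).
pose K := cokermx M.
have MK : M *m K = 0 := mulmx_coker M.
have KI a b : a != b -> map_mx toQ (urow a b) *m K != 0.
  by move=> ab; have := key Hp h2k sxi ab; rewrite submxE.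
clearbody K.
pose Phi (x : G) (t : 'I_k) := \sum_i (if sx i == x then K i t else 0).
have PhiE a t : Phi (sx a) t = K a t.
  by rewrite /Phi; under eq_bigr do rewrite (inj_eq sxi); rewrite sum_ind.
have PhiD a c cc : sx a + sx c = sx cc -> forall t, Phi (sx a + sx c) t = Phi (sx a) t + Phi (sx c) t.
  move=> E t; rewrite E !PhiE.
  move: MK; move/matrixP => /(_ (enum_rank (a, c, cc)) t).
  rewrite !mxE.
  under eq_bigr do rewrite /M /relmx !mxE enum_rankK /= E eqxx intrB intrD !mulrz_nat.
  under eq_bigr do rewrite !mulrDl mulNr !mulr_natl !mulrb.
  rewrite sumrB big_split /= !sum_ind => /eqP; rewrite subr_eq0 => /eqP <-.
  done.
have PhiI a b : a != b -> exists t, K a t != K b t.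
  move=> ab; have := KI a b ab.
  case: (boolP [exists t, K a t != K b t]) => [/existsP[t ht] _|]; first by exists t.
  move=> /existsPn H /negP []; apply/eqP/matrixP => o t; rewrite !mxE.
  under eq_bigr do rewrite !mxE intrB !mulrz_nat mulrBl !mulr_natl !mulrb.
  by rewrite sumrB !sum_ind; apply/eqP; rewrite subr_eq0; have := H t; rewrite negbK.
pose L (x : G) := map (Phi x) (enum 'I_k).
exists (fun x y => lexle (L x) (L y)); split; [split; [|split; [|split]]|].
- by move=> x _; apply: lex_refl.
- move=> x y /inA[a ->] /inA[b ->] l1 l2.
  have := lex_anti l1 l2.
  case: (eqVneq a b) => [-> //|ab]; have [t ht] := PhiI a b ab.
  move=> /eq_in_map /(_ t); rewrite mem_enum !PhiE => /(_ isT) E.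
  by move: ht; rewrite E eqxx.
- by move=> x y z _ _ _; apply: lex_trans.
- by move=> x y _ _; case/orP: (lex_total (enum 'I_k) (Phi x) (Phi y)); [left|right].
- move=> x y c /inA[a ->] /inA[b ->] /inA[cc ->] /inA[xc Exc] /inA[yc Eyc] l.
  rewrite /L (eq_map (PhiD _ _ _ Exc)) (eq_map (PhiD _ _ _ Eyc)).
  exact: lex_add.
Qed.
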